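(* For $n\ge0$ let $$P_n(z)=\frac{\imath^n}{2^n}\sum_{k=0}^n\binom{n}{k}\left(-\imath z+\tfrac12-k\right)_n$$ (the polynomial associated to the Weyl ordering $a_{n,k}=2^{-n}\binom nk$). Then, as polynomials in $z$, $$P_n(z)=\frac{n!}{(2\imath)^n}\,{}_3F_2\!\left(\begin{matrix}-n,\ n+1,\ \tfrac14-\tfrac{\imath z}{2}\\ \tfrac12,\ 1\end{matrix}\,\Big|\,1\right).$$
   Context: $\imath=\sqrt{-1}$; $(x)_n=x(x+1)\cdots(x+n-1)$. ${}_3F_2\!\left(\begin{smallmatrix}a_1,a_2,a_3\\ b_1,b_2\end{smallmatrix}\big|x\right)=\sum_{k\ge0}\frac{(a_1)_k(a_2)_k(a_3)_k}{(b_1)_k(b_2)_k}\frac{x^k}{k!}$ (a terminating sum here since $a_1=-n$). *)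

(* Defs.v *)
From HB Require Import structures.
From mathcomp Require Import all_boot all_order all_algebra all_field.
Set Implicit Arguments. Unset Strict Implicit. Unset Printing Implicit Defensive.
Import Order.TTheory GRing.Theory Num.Theory.
Local Open Scope ring_scope.

Definition rising (R : pzSemiRingType) (x : R) (n : nat) : R :=
  \prod_(i < n) (x + i%:R).

Definition Pn (n : nat) : {poly algC} :=
  ('i ^+ n / 2 ^+ n) *:
    \sum_(k < n.+1) ('C(n, k)%:R : algC) *:
        rising (- ('i *: 'X) + (1 / 2 - (k : nat)%:R)%:P) n.

(* Terminating 3F2( -n, a2, a3 ; b1, b2 | x ) with a3 a polynomial in z:
   sum_{k>=0} (-n)_k (a2)_k (a3)_k / ((b1)_k (b2)_k) x^k / k!.
   Since (-n)_k = 0 for k > n, the sum is over k = 0..n. *)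
Definition F32_term (n : nat) (a2 : algC) (a3 : {poly algC}) (b1 b2 x : algC)
  : {poly algC} :=
  \sum_(k < n.+1)
    ((rising (- (n%:R)) k * rising a2 k / (rising b1 k * rising b2 k)
       * x ^+ k / (k`!)%:R) *: rising a3 k).

(* Main.v *)
Require Import Defs.
From HB Require Import structures.
From mathcomp Require Import all_boot all_order all_algebra all_field ring zify.
Import Order.TTheory GRing.Theory Num.Theory.
Local Open Scope ring_scope.
Set Implicit Arguments. Unset Strict Implicit.

Section Gen.
Variable R : comNzRingType.
Implicit Types (x y a b : R) (f g : nat -> R).

Lemma rS x n : rising x n.+1 = rising x n * (x + n%:R).
Proof. by rewrite /rising big_ord_recr. Qed.

Lemma rSl x n : rising x n.+1 = x * rising (x + 1) n.
Proof.
rewrite /rising big_ord_recl addr0; congr (_ * _); apply: eq_bigr => i _.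
by rewrite lift0 mulrS addrA.
Qed.

Lemma r0 x : rising x 0 = 1.
Proof. by rewrite /rising big_ord0. Qed.

Lemma radd x n m : rising x (n + m) = rising x n * rising (x + n%:R) m.
Proof.
rewrite /rising big_split_ord /=; congr (_ * _); apply: eq_bigr => i _.
by rewrite natrD addrA.
Qed.

Lemma rdiff x m : rising x m.+1 - rising (x - 1) m.+1 = m.+1%:R * rising x m.
Proof.
rewrite rS rSl subrK mulrSr; ring.
Qed.

Definition Bs n f := \sum_(i < n.+1) 'C(n, i)%:R * f i.
Definition Ds n f := \sum_(i < n.+1) (-1) ^+ i * 'C(n, i)%:R * f i.

Lemma BsS n f : Bs n.+1 f = Bs n f + Bs n (fun i => f i.+1).
Proof.
rewrite /Bs big_ord_recl.
under eq_bigr => i _ do rewrite lift0 binS natrD mulrDl.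
rewrite big_split /= addrA; congr (_ + _).
rewrite [in RHS]big_ord_recl big_ord_recr /= (@bin_small n n.+1) // mul0r addr0 !bin0.
by congr (_ + _); apply: eq_bigr => i _; rewrite lift0.
Qed.

Lemma DsS n f : Ds n.+1 f = Ds n f - Ds n (fun i => f i.+1).
Proof.
have E m g : Ds m g = Bs m (fun i => (-1) ^+ i * g i).
  by rewrite /Ds /Bs; apply: eq_bigr => i _; rewrite mulrCA mulrA.
rewrite !E BsS; congr (_ + _).
rewrite /Bs -sumrN; apply: eq_bigr => i _; rewrite exprS; ring.
Qed.

Lemma Bs_lin n f g : Bs n f + Bs n g = Bs n (fun i => f i + g i).
Proof. by rewrite /Bs -big_split; apply: eq_bigr => i _; rewrite mulrDr. Qed.

Lemma Ds_sub n f g : Ds n f - Ds n g = Ds n (fun i => f i - g i).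
Proof. by rewrite /Ds -sumrB; apply: eq_bigr => i _; rewrite mulrBr. Qed.

Lemma Ds_ext n f g : (forall i, f i = g i) -> Ds n f = Ds n g.
Proof. by move=> e; rewrite /Ds; apply: eq_bigr => i _; rewrite e. Qed.

Lemma Bs_ext n f g : (forall i, f i = g i) -> Bs n f = Bs n g.
Proof. by move=> e; rewrite /Bs; apply: eq_bigr => i _; rewrite e. Qed.

Lemma conv n f : Bs n (fun l => Ds n (fun m => f (l + m)%N)) = Ds n (fun j => f (j + j)%N).
Proof.
elim: n f => [|n IH] f.
  by rewrite /Bs /Ds !big_ord_recl !big_ord0 /= !addr0 !mul1r.
rewrite BsS.
rewrite (@Bs_ext n (fun l => Ds n.+1 (fun m => f (l + m)%N)) (fun l => Ds n (fun m => f (l + m)%N) - Ds n (fun m => f (l.+1 + m)%N))); last first.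
  by move=> l; rewrite DsS; congr (_ - _); apply: Ds_ext => m; rewrite addnS.
rewrite (@Bs_ext n (fun l => Ds n.+1 (fun m => f (l.+1 + m)%N)) (fun l => Ds n (fun m => f (l.+1 + m)%N) - Ds n (fun m => f (l.+2 + m)%N))); last first.
  by move=> l; rewrite DsS; congr (_ - _); apply: Ds_ext => m; rewrite addnS.
rewrite Bs_lin.
rewrite (@Bs_ext n _ (fun l => Ds n (fun m => (fun k => f k - f k.+2) (l + m)%N))); last first.
  move=> l; rewrite addrA subrK Ds_sub; apply: Ds_ext => m /=.
  by rewrite !addSn.
rewrite (IH (fun k => f k - f k.+2)) DsS -Ds_sub; congr (_ - _); apply: Ds_ext => m.
by rewrite addSn addnS.
Qed.

Lemma vdm a b n : rising (a + b) n = Bs n (fun i => rising a i * rising b (n - i)).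
Proof.
elim: n => [|n IH].
  by rewrite /Bs big_ord_recl big_ord0 /= !r0 !mul1r addr0.
rewrite BsS rS IH /Bs mulr_suml -big_split /=; apply: eq_bigr => [[i /= Hi]] _.
rewrite subSS subSn // rS rS; rewrite natrB //.
ring.
Qed.

Lemma Ds_scale n c f : Ds n (fun i => c * f i) = c * Ds n f.
Proof. by rewrite /Ds mulr_sumr; apply: eq_bigr => i _; ring. Qed.

Lemma Dfall x n m :
  m`!%:R * Ds n (fun i => rising (x - i%:R) (n + m)) = (n + m)`!%:R * rising x m.
Proof.
elim: n => [|n IH].
  by rewrite /Ds big_ord_recl big_ord0 /= addr0 subr0 !mul1r.
rewrite DsS Ds_sub.
rewrite (@Ds_ext n _ (fun i => (n + m).+1%:R * rising (x - i%:R) (n + m))); last first.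
  by move=> i; rewrite addSn -rdiff mulrSr opprD addrA.
rewrite Ds_scale mulrCA IH addSn factS natrM; ring.
Qed.

Lemma rdouble h z n : h + h = 1 ->
  rising (z + z) (n + n) = (4 : R) ^+ n * (rising z n * rising (z + h) n).
Proof.
move=> hh; elim: n => [|n IH]; first by rewrite !r0 expr0 !mul1r.
have key w : (w + w) * (w + w + (h + h)) = 4 * (w * (w + h)) by ring.
rewrite hh in key.
rewrite addSn addnS !rS IH.
have E1 : (z+z+(n+n)%:R) * (z+z+(n+n).+1%:R) = 4 * ((z+n%:R)*(z+n%:R+h)).
  by rewrite -key mulrSr natrD; ring.
rewrite -mulrA E1 exprS; ring.
Qed.

Lemma Bs_scale n c f : c * Bs n f = Bs n (fun i => c * f i).
Proof. by rewrite /Bs mulr_sumr; apply: eq_bigr => i _; ring. Qed.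

Lemma Ds_Bs n (G : nat -> R) (K : nat -> nat -> R) :
  Ds n (fun j => Bs n (fun i => G i * K j i)) = Bs n (fun i => G i * Ds n (fun j => K j i)).
Proof.
rewrite /Ds /Bs; under eq_bigr do rewrite mulr_sumr.
rewrite exchange_big; apply: eq_bigr => i _; rewrite !mulr_sumr; apply: eq_bigr => j _; ring.
Qed.
End Gen.

Local Notation P := {poly algC}.

Lemma rising_polyC (c : algC) k : rising (c%:P) k = (rising c k)%:P.
Proof.
rewrite /rising rmorph_prod; apply: eq_bigr => i _; by rewrite rmorphD rmorph_nat.
Qed.

Lemma natP_neq0 k : (k`!%:R : P) != 0.
Proof. by rewrite -polyC_natr polyC_eq0 pnatr_eq0 -lt0n fact_gt0. Qed.

Lemma natC_neq0 k : (k`!%:R : algC) != 0.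
Proof. by rewrite pnatr_eq0 -lt0n fact_gt0. Qed.

Lemma divP k (D E : P) : k`!%:R * D = E -> D = (k`!%:R : algC)^-1 *: E.
Proof.
move=> <-; rewrite mulr_natl -scaler_nat scalerA mulVf ?scale1r //; exact: natC_neq0.
Qed.

Section Main.
Variable n : nat.
Let y : P := (1 / 4)%:P - ('i / 2) *: 'X.
Let h : P := (1 / 2 : algC)%:P.
Lemma hh : h + h = 1.
Proof. by rewrite /h -polyCD -polyC1; congr (_ %:P); field. Qed.

Lemma argE (k : nat) : - ('i *: 'X) + (1 / 2 - k%:R)%:P = (y + y) - k%:R :> P.
Proof.
rewrite polyCB polyC_natr -/h.
have e0 : (1/4 : algC) = 1/2 * (1/2) by rewrite mulf_div mulr1 -natrM.
have e1 : (1/4 : algC)%:P = h*h. rewrite e0 rmorphM. exact: erefl.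
have e2 : ('i/2) *: ('X:P) = 'i%:P * h * 'X.
  by rewrite -mul_polyC /h div1r -rmorphM.
have e3 : 'i *: ('X:P) = 'i%:P * (h+h) * 'X by rewrite hh mulr1 mul_polyC.
have ey : y = h*h - 'i%:P * h * 'X by rewrite -e1 -e2.
rewrite ey e3.
transitivity (- ('i%:P * (h + h) * 'X) + (h * (h+h) - k%:R)); first by rewrite hh mulr1.
ring.
Qed.

Let F l := rising (y + y - l%:R) (n + n).

Lemma S1 : (n + n)`!%:R * \sum_(k < n.+1) ('C(n, k)%:R : algC) *: rising (- ('i *: 'X) + (1 / 2 - k%:R)%:P) n
  = n`!%:R * Bs n (fun k => Ds n (fun i => F (k + i)%N)).
Proof.
rewrite /Bs mulr_sumr mulr_sumr; apply: eq_bigr => k _.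
have E : Ds n (fun i => F (k + i)%N) = Ds n (fun i => rising (y + y - k%:R - i%:R) (n + n)).
  by apply: Ds_ext => i; rewrite /F natrD opprD addrA.
rewrite E argE scaler_nat mulrnAr -Dfall; ring.
Qed.

Lemma S2 : Bs n (fun k => Ds n (fun i => F (k + i)%N)) = Ds n (fun j => F (j + j)%N).
Proof. exact: conv. Qed.

Lemma S3 j : F (j + j)%N = 4 ^+ n * Bs n (fun i => rising (h - n%:R) (n - i) * rising (y - j%:R) (n + i)).
Proof.
have -> : F (j + j)%N = rising ((y - j%:R) + (y - j%:R)) (n + n) by rewrite /F natrD; congr rising; ring.
rewrite (rdouble _ _ hh); congr (_ * _).
have -> : y - j%:R + h = (y - j%:R + n%:R) + (h - n%:R) by ring.
rewrite (vdm (y - j%:R + n%:R) (h - n%:R)) Bs_scale; apply: Bs_ext => i.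
by rewrite radd; ring.
Qed.

Lemma S6 i : Ds n (fun j => rising (y - j%:R) (n + i)) = (i`!%:R : algC)^-1 *: ((n + i)`!%:R * rising y i).
Proof. apply: divP; exact: Dfall. Qed.

Lemma Smain : (n + n)`!%:R * \sum_(k < n.+1) ('C(n, k)%:R : algC) *: rising (- ('i *: 'X) + (1 / 2 - k%:R)%:P) n
  = n`!%:R * (4 ^+ n * Bs n (fun i => rising (h - n%:R) (n - i) *
      ((i`!%:R : algC)^-1 *: ((n + i)`!%:R * rising y i)))).
Proof.
rewrite S1 S2; congr (_ * _).
rewrite (@Ds_ext _ n _ (fun j => 4 ^+ n * Bs n (fun i => rising (h - n%:R) (n - i) * rising (y - j%:R) (n + i)))); last by move=> j; exact: S3.
rewrite Ds_scale Ds_Bs; congr (_ * _); apply: Bs_ext => i.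
by rewrite S6.
Qed.

End Main.


Lemma rrefl (R : comNzRingType) (a : R) m : rising (a - m%:R) m = (-1) ^+ m * rising (1 - a) m.
Proof.
elim: m => [|m IH]; first by rewrite !r0 mulr1.
rewrite rSl rS exprS.
have -> : a - m.+1%:R + 1 = a - m%:R by rewrite mulrSr; ring.
rewrite IH mulrSr; ring.
Qed.

Lemma ra n k : (k <= n)%N -> ((n - k)`!%:R : algC) * rising (- n%:R) k = (-1) ^+ k * n`!%:R.
Proof.
elim: k => [|k IH] Hk; first by rewrite subn0 r0 mulr1 mul1r.
have Hk' : (k <= n)%N by apply: ltnW.
have hm : (n - k = (n - k.+1).+1)%N by lia.
move: (IH Hk'); rewrite hm factS natrM => {}IH.
have hn : (n%:R : algC) = k%:R + (n - k.+1).+1%:R by rewrite -natrD; congr (_%:R); lia.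
rewrite rS exprS -mulrA -IH hn; ring.
Qed.

Lemma rb n k : (n`!%:R : algC) * rising (n.+1%:R) k = (n + k)`!%:R.
Proof.
elim: k => [|k IH]; first by rewrite r0 mulr1 addn0.
rewrite rS mulrA IH addnS factS natrM -natrD addSn; ring.
Qed.

Lemma rc k : rising (1 : algC) k = k`!%:R.
Proof. by have := rb 0 k; rewrite fact0 mul1r add0n. Qed.

Lemma re n : (4 : algC) ^+ n * rising (1/2) n * n`!%:R = (n + n)`!%:R.
Proof.
elim: n => [|n IH]; first by rewrite r0 expr0 !mul1r.
rewrite addSn addnS !factS !natrM -IH exprS rS.
rewrite !mulrSr natrD; field; done.
Qed.

Lemma rd n k : (k <= n)%N ->
  rising (1/2 : algC) k * rising (1/2 - n%:R) (n - k) = (-1) ^+ (n - k) * rising (1/2) n.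
Proof.
move=> Hk.
have -> : (1/2 - n%:R : algC) = (1/2 - k%:R) - (n - k)%:R by rewrite natrB //; ring.
rewrite rrefl.
have -> : (1 - (1 / 2 - k%:R) : algC) = 1/2 + k%:R by field.
by rewrite mulrCA -radd subnKC.
Qed.

Lemma solveC (a x b : algC) : a != 0 -> a * x = b -> x = b / a.
Proof. by move=> a0 <-; field. Qed.

Lemma scal n k : (k <= n)%N ->
 'i ^+ n / 2 ^+ n / (n + n)`!%:R * n`!%:R * 4 ^+ n * 'C(n, k)%:R * rising (1 / 2 - n%:R) (n - k) / k`!%:R * (n + k)`!%:R
 = n`!%:R / (2 * 'i) ^+ n * (rising (- n%:R) k * rising n.+1%:R k / (rising (1 / 2) k * rising 1 k) * 1 ^+ k / k`!%:R) :> algC.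
Proof.
move=> Hk.
have Hn0 : rising (1/2 : algC) n != 0.
  by apply/eqP => h0; move: (re n); rewrite h0 mulr0 mul0r => /eqP; rewrite eq_sym (negbTE (natC_neq0 _)).
have Hk0 : rising (1/2 : algC) k != 0.
  by apply/eqP => h0; move: (re k); rewrite h0 mulr0 mul0r => /eqP; rewrite eq_sym (negbTE (natC_neq0 _)).
rewrite (solveC (natC_neq0 _) (ra Hk)).
rewrite -(rb n k) rc.
rewrite (solveC Hk0 (rd Hk)).
have hC : ('C(n, k)%:R : algC) = n`!%:R / (k`!%:R * (n - k)`!%:R).
  by apply: (solveC _ _); [rewrite mulf_neq0 // natC_neq0 | rewrite -!natrM mulnC bin_fact].
rewrite hC -(re n) exprMn.
set I := 'i ^+ n.
have I0 : I != 0 by rewrite expf_neq0 // neq0Ci.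
have II : I * I = (-1) ^+ n by rewrite -exprMn -expr2 sqrCi.
have eI : I = (-1) ^+ n / I by rewrite -II mulrK // unitfE.
have es : ((-1) ^+ n : algC) = (-1) ^+ k / (-1) ^+ (n - k) by rewrite invr_sign -exprD subnKC.
rewrite [in LHS]eI es.
have s20 : ((-1) ^+ (n - k) : algC) != 0 by rewrite signr_eq0.
have s10 : ((-1) ^+ k : algC) != 0 by rewrite signr_eq0.
have t0 : (2 ^+ n : algC) != 0 by rewrite expf_neq0 // pnatr_eq0.
have f0 : (4 ^+ n : algC) != 0 by rewrite expf_neq0 // pnatr_eq0.
have a0 := natC_neq0 n. have b0 := natC_neq0 k. have c0 := natC_neq0 (n - k).
move: Hk0 Hn0 I0 s20 s10 t0 f0 a0 b0 c0.
set HK := (rising (1/2 : algC) k : algC).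
set HN := (rising (1/2 : algC) n : algC).
set R1 := (rising (n.+1%:R : algC) k : algC).
set s1 := ((-1) ^+ k : algC). set s2 := ((-1) ^+ (n - k) : algC).
set T := (2 ^+ n : algC). set F := (4 ^+ n : algC).
set fn := (n`!%:R : algC). set fk := (k`!%:R : algC). set fnk := ((n - k)`!%:R : algC).
clearbody HK HN R1 s1 s2 T F fn fk fnk I.
move=> q1 q2 q3 q4 q5 q6 q7 q8 q9 q10; rewrite expr1n.
field; by rewrite q1 q2 q3 q4 q6 q7 q8 q9 q10.
Qed.

Theorem mainTheorem15 (n : nat) :
  Pn n =
  ((n`!)%:R / (2 * 'i) ^+ n) *:
    F32_term n (n.+1)%:R ((1 / 4)%:P - ('i / 2) *: 'X) (1 / 2) 1 1.
Proof.
rewrite /Pn /F32_term.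
have HS := divP (Smain n).
rewrite HS /Bs !mulr_sumr !scaler_sumr; apply: eq_bigr => k _.
set Y := rising ((1/4)%:P - _) k.
have eh : ((1/2)%:P - n%:R : {poly algC}) = (1/2 - n%:R : algC)%:P by rewrite rmorphB rmorph_nat.
rewrite eh rising_polyC -!polyC_natr.
have e4 : ((4%:R : algC)%:P : {poly algC}) ^+ n = ((4%:R : algC) ^+ n)%:P by rewrite rmorphXn.
rewrite e4 -!mul_polyC !mulrA -!rmorphM; congr (_ * _).
apply: congr1; have HH := @scal n k (ltn_ord k). rewrite HH. congr (_ * (_ * _ / (_ * _) * _ / _)).
Qed.
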